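(* Let $Q$ be a set and $(F_i)_{i\in I}$ a family of real-valued maps on $Q$ that is of type $c_0\ell_1$. Then the cardinality of the set $\{t\in Q:(F_i(t))_{i\in I}\notin c_0(I)\}$ is less than or equal to the cardinality of $I$.
   Context: $c_0(I)$ is the set of real families $(a_i)_{i\in I}$ such that $\{i:|a_i|\ge\varepsilon\}$ is finite for every $\varepsilon>0$; write $\lim_{i\in I}a_i=0$ for this. A family $(F_i)_{i\in I}$ of real-valued maps on a set $Q$ is of type $c_0\ell_1$ if one can write $F_i(t)=a_{i,t}+b_{i,t}$ for all $i\in I$, $t\in Q$, with $\lim_{i\in I}a_{i,t}=0$ for every $t\in Q$ and $\sup_{i\in I}\sum_{t\in Q}|b_{i,t}|<\infty$. *)

(* Defs.v *)
From HB Require Import structures.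
From mathcomp Require Import all_boot all_order all_algebra.
From mathcomp Require Import all_classical all_reals.
From mathcomp Require Import ereal esum.
Set Implicit Arguments. Unset Strict Implicit. Unset Printing Implicit Defensive.
Import Order.TTheory GRing.Theory Num.Theory.
Local Open Scope classical_set_scope.
Local Open Scope ring_scope.

Definition in_c0 (R : realType) (I : Type) (a : I -> R) : Prop :=
  forall eps : R, 0 < eps -> finite_set [set i | eps <= `|a i|].

Definition type_c0l1 (R : realType) (I : Type) (Q : choiceType)
    (F : I -> Q -> R) : Prop :=
  exists (a b : I -> Q -> R),
    (forall i t, F i t = a i t + b i t) /\
    (forall t, in_c0 (fun i => a i t)) /\
    (exists M : R, forall i, (\esum_(t in [set: Q]) (`|b i t|)%:E <= M%:E)%E).

(* Main.v *)
Require Import Defs.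
From HB Require Import structures.
From mathcomp Require Import all_boot all_order all_algebra.
From mathcomp Require Import all_classical all_reals.
From mathcomp Require Import ereal esum.
From mathcomp Require Import zify.
Local Open Scope classical_set_scope.
Local Open Scope card_scope.

Section Absorb.
Variable I : pointedType.
Definition Pg (G : set ((I * nat) * I)) : Prop :=
  [/\ (forall a n x y, G ((a,n),x) -> G((a,n),y) -> x = y),
      (forall a n b m x, G((a,n),x) -> G((b,m),x) -> a = b /\ n = m),
      (forall a n x m, G((a,n),x) -> exists y, G((a,m),y)) &
      (forall a n x, G((a,n),x) -> exists y, G((x,0%N),y))].

Lemma absorb : finite_set [set: I] \/
  exists h : I -> nat -> I, forall a n b m, h a n = h b m -> a = b /\ n = m.
Proof.
have [A [[Af Ai At Ac] Amax]] : exists A, Pg A /\ (forall B, A `<` B -> ~ Pg B).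
  apply: Zorn_bigcup => F FP Ftot; split.
  - move=> a n x y [X FX Xx] [Y FY Yy].
    have [XY|YX] := Ftot X Y FX FY.
      by have [H _ _ _] := FP Y FY; apply: (H a n x y (XY _ Xx) Yy).
    by have [H _ _ _] := FP X FX; apply: (H a n x y Xx (YX _ Yy)).
  - move=> a n b m x [X FX Xx] [Y FY Yy].
    have [XY|YX] := Ftot X Y FX FY.
      by have [_ H _ _] := FP Y FY; apply: (H a n b m x (XY _ Xx) Yy).
    by have [_ H _ _] := FP X FX; apply: (H a n b m x Xx (YX _ Yy)).
  - move=> a n x m [X FX Xx].
    have [_ _ H _] := FP X FX; have [y Xy] := H _ _ _ m Xx.
    by exists y; exists X.
  - move=> a n x [X FX Xx].
    have [_ _ _ H] := FP X FX; have [y Xy] := H _ _ _ Xx.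
    by exists y; exists X.
pose D := [set a | exists n x, A ((a,n),x)].
have finD : finite_set (~` D).
  apply: contrapT; move=> Hinf. have := proj1 (infiniteP _) Hinf. move=> /pcard_leP; case=> e.
  have eD : forall k, ~ D (e k) by move=> k; apply: (@funS _ _ _ _ e k).
  have einj : forall k l, e k = e l -> k = l.
    by move=> k l; apply: (@inj _ _ _ e); rewrite inE.
  have pinj : forall p q : nat * nat, pickle p = pickle q -> p = q.
    exact: (pcan_inj (@pickleK _)).
  pose N := fun z : (I * nat) * I => exists k n, z = ((e k, n), e (pickle (k,n))).
  apply: (Amax (A `|` N)); split.
  - exact: subsetUl.
  - move=> H; apply: (eD 0%N); exists 0%N, (e (pickle (0%N, 0%N))).
    by apply: H; right; exists 0%N, 0%N.
  - move=> a n x y [Ax|[k [l E]]] [Ay|[k' [l' E']]].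
    + exact: Af Ax Ay.
    + by exfalso; case: E' => Ea _ _; apply: (eD k'); rewrite -Ea; exists n, x.
    + by exfalso; case: E => Ea _ _; apply: (eD k); rewrite -Ea; exists n, y.
    + case: E => Ea En ->; case: E' => Ea' En' ->.
      have kk : k = k' by apply: einj; rewrite -Ea -Ea'.
      by subst k'; congr (e (pickle (_, _))); rewrite -En -En'.
  - move=> a n b m x [Ax|[k [l E]]] [Bx|[k' [l' E']]].
    + exact: Ai Ax Bx.
    + exfalso; case: E' => _ _ Ex; have [y Ay] := Ac _ _ _ Ax.
      by apply: (eD (pickle (k',l'))); rewrite -Ex; exists 0%N, y.
    + exfalso; case: E => _ _ Ex; have [y Ay] := Ac _ _ _ Bx.
      by apply: (eD (pickle (k,l))); rewrite -Ex; exists 0%N, y.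
    + case: E => -> -> Ex; case: E' => -> -> Ex'.
      have := pinj _ _ (einj _ _ (etrans (esym Ex) Ex')).
      by case=> -> ->.
  - move=> a n x m [Ax|[k [l E]]].
    + by have [y Ay] := At _ _ _ m Ax; exists y; left.
    + case: E => -> _ _.
      by exists (e (pickle (k, m))); right; exists k, m.
  - move=> a n x [Ax|[k [l E]]].
    + by have [y Ay] := Ac _ _ _ Ax; exists y; left.
    + case: E => _ _ ->.
      by exists (e (pickle (pickle (k, l), 0%N))); right; exists (pickle (k,l)), 0%N.
have [c cinj] := countable_injP _ (finite_set_countable finD).
have [[a0 Da0]|ND] := pselect (exists a, D a); last first.
  have D0 : D = set0 by apply/seteqP; split=> // a Da; apply: ND; exists a.
  by left; move: finD; rewrite D0 setC0.
have pinj : forall p q : nat * nat, pickle p = pickle q -> p = q.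
  exact: (pcan_inj (@pickleK _)).
have gex : forall p : I * nat, exists x, D p.1 -> A ((p.1, p.2), x).
  move=> [a n] /=; have [Da|nD] := pselect (D a); last by exists a.
  by case: Da => n0 [x0 Ax0]; have [y Ay] := At _ _ _ n Ax0; exists y.
have [g gP] := choice gex.
right; exists (fun a n => if `[< D a >] then g (a, (2 * n)%N)
                          else g (a0, (2 * pickle (c a, n)).+1)).
move=> a n b m.
case: (asboolP (D a)) => Da; case: (asboolP (D b)) => Db => E.
- have H1 := gP (a, (2 * n)%N) Da; have H2 := gP (b, (2 * m)%N) Db.
  rewrite /= in H1 H2; rewrite E in H1; have [-> ?] := Ai _ _ _ _ _ H1 H2; split=> //; lia.
- have H1 := gP (a, (2 * n)%N) Da; have H2 := gP (a0, (2 * pickle (c b, m)).+1) Da0.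
  rewrite /= in H1 H2; rewrite E in H1; have [_ ?] := Ai _ _ _ _ _ H1 H2; lia.
- have H1 := gP (a0, (2 * pickle (c a, n)).+1) Da0; have H2 := gP (b, (2 * m)%N) Db.
  rewrite /= in H1 H2; rewrite E in H1; have [_ ?] := Ai _ _ _ _ _ H1 H2; lia.
- have H1 := gP (a0, (2 * pickle (c a, n)).+1) Da0.
  have H2 := gP (a0, (2 * pickle (c b, m)).+1) Da0.
  rewrite /= in H1 H2; rewrite E in H1; have [_ Ep] := Ai _ _ _ _ _ H1 H2.
  have /pinj [Ec ->] : pickle (c a, n) = pickle (c b, m) by lia.
  by split=> //; apply: cinj => //; rewrite inE.
Qed.
End Absorb.
From mathcomp Require Import finmap.

Import Order.TTheory GRing.Theory Num.Theory.
Local Open Scope ring_scope.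

Lemma level_finite (R : realType) (Q : choiceType) (b : Q -> R) (M e : R) :
  (\esum_(t in [set: Q]) (`|b t|)%:E <= M%:E)%E -> (0 < e)%R ->
  finite_set [set t | (e <= `|b t|)%R].
Proof.
move=> hM e0; apply: contrapT => inf.
have [B BA NB] := infinite_set_fset (Num.trunc (M / e)).+1 inf.
have : ((\sum_(t <- B) `|b t|)%:E <= M%:E)%E.
  apply: le_trans hM; apply: esum_ge; exists [set` B].
    by split; [exact: finite_fset|].
  by rewrite fsbig_finite ?finite_fset // set_fsetK sumEFin.
rewrite lee_fin => H.
have H2 : (e *+ (Num.trunc (M / e)).+1 <= \sum_(t <- B) `|b t|)%R.
  apply: (@le_trans _ _ (e *+ size B)).
    by apply: ler_wpMn2l; [exact: ltW|].
  have -> : (e *+ size B = \sum_(t <- B) e)%R.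
    by rewrite big_const_seq count_predT iter_addr addr0.
  rewrite [X in (_ <= X)%R]big_seq [X in (X <= _)%R]big_seq.
  by apply: ler_sum => t tB; apply: BA.
have := truncnS_gt (M / e); rewrite ltr_pdivrMr // => H3.
have H4 : M < e *+ (Num.trunc (M / e)).+1 by rewrite -[e *+ _]mulr_natr mulrC.
by have := lt_le_trans H4 (le_trans H2 H); rewrite ltxx.
Qed.

Local Open Scope card_scope.

Lemma c0_finite (R : realType) (I : Type) (f : I -> R) :
  finite_set [set: I] -> in_c0 f.
Proof. by move=> fin eps _; apply: sub_finite_set fin. Qed.

Theorem proposition2p6 (R : realType) (I : Type) (Q : choiceType)
    (F : I -> Q -> R) :
  type_c0l1 F ->
  [set t : Q | ~ in_c0 (fun i => F i t)] #<= [set: I].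
Proof.
move=> [a [b [Fab [ha [M hM]]]]].
have S0 : finite_set [set: I] -> [set t : Q | ~ in_c0 (fun i => F i t)] #<= [set: I].
  move=> fin; rewrite (_ : [set t | _] = set0); first exact: card_ge0.
  by apply/seteqP; split=> t //= /(_ (@c0_finite _ _ _ fin)).
have L2 : forall i, countable [set t | b i t != 0].
  move=> i; have -> : [set t | b i t != 0] =
      \bigcup_(n in [set: nat]) [set t | n.+1%:R^-1 <= `|b i t|].
    apply/seteqP; split=> t /=.
    + move=> bt; exists (Num.trunc (`|b i t|^-1)) => //=.
      have bp : 0 < `|b i t| by rewrite normr_gt0.
      have := truncnS_gt (`|b i t|^-1).
      rewrite -div1r ltr_pdivrMr // => h.
      by rewrite -div1r ler_pdivrMr ?ltr0Sn // mulrC; apply: ltW.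
    + case=> n _ /= h; apply/eqP => b0; move: h; rewrite b0 normr0.
      by rewrite leNgt invr_gt0 ltr0Sn.
  apply: bigcup_countable => // n _; apply: finite_set_countable.
  by apply: level_finite (hM i) _; rewrite invr_gt0 ltr0Sn.
have cex : forall i, exists c : Q -> nat, {in [set t | b i t != 0] &, injective c}.
  by move=> i; apply/countable_injP.
have [c cP] := choice cex.
have Sb : forall t, ~ in_c0 (fun i => F i t) -> exists i, b i t != 0.
  move=> t nS; apply: contrapT => nb; apply: nS.
  have b0 : forall i, b i t = 0.
    by move=> i; apply/eqP; apply: contrapT => H; apply: nb; exists i; apply/negP.
  rewrite (_ : (fun i => F i t) = fun i => a i t); first exact: ha.
  by apply/funext => i; rewrite Fab b0 addr0.
move: F a b Fab ha hM S0 Sb c cP {L2 cex}.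
elim/Ppointed: I => I F a b Fab ha hM S0 Sb c cP.
  by apply: S0; rewrite (empty_eq0 [set: I]); exact: finite_set0.
case: (absorb I) => [fin|[h hinj]]; first exact: S0.
have iex : forall t, exists i, ~ in_c0 (fun i => F i t) -> b i t != 0.
  move=> t; have [nS|yS] := pselect (~ in_c0 (fun i => F i t)).
    by have [i ?] := Sb t nS; exists i.
  by exists point.
have [it itP] := choice iex.
apply/pcard_injP; exists (fun t => h (it t) (c (it t) t)).
move=> t s /set_mem St /set_mem Ss /hinj [Ei Ec].
apply: (cP (it t)).
- exact: (mem_set (itP t St)).
- by rewrite Ei; exact: (mem_set (itP s Ss)).
- by rewrite {2}Ei.
Qed.
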